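(* There exists $C>1$, depending only on $M$, such that for $l$ sufficiently large the following holds: if $E_j(\omega)$ is an eigenvalue of $H_\omega(\Lambda_l)$ with normalized eigenvector $\phi$, $u\in\mathbb{R}^l$ is defined by $u(i)=\phi(i)^2$, $j_0$ is an index with $u(j_0)=\max_ju(j)$, $\mathcal{J}=\{j_0-1,j_0,j_0+1\}$ and $\mathcal{K}=\{1,\dots,l\}\setminus\mathcal{J}$, then $\|u|_{\mathcal{K}}\|_1\in(1/C,1)$.
   Context: Let $(a_\omega(n))_{n\in\mathbb{Z}}$ be real numbers with $|a_\omega(n)|\in[1/M,M]$ for all $n$, for some $M>1$. $H_\omega(\Lambda_l)$ is the hopping operator $(H u)(n)=a_\omega(n+1)u(n+1)+a_\omega(n)u(n-1)$ restricted to $\ell^2(\{1,\dots,l\})$ with Dirichlet boundary conditions. $u|_{\mathcal{K}}$ is the restriction of $u$ to $\mathcal{K}$. *)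

(* Defs.v *)
From mathcomp Require Import all_boot all_order all_algebra.
From mathcomp Require Import reals.
Set Implicit Arguments. Unset Strict Implicit. Unset Printing Implicit Defensive.
Import Order.TTheory GRing.Theory Num.Theory.
Local Open Scope ring_scope.

(* Index i : 'I_l corresponds to the site n = i+1.
   (H u)(n) = a(n+1) u(n+1) + a(n) u(n-1), u(0) = u(l+1) = 0,
   so H(n, n+1) = a(n+1) and H(n, n-1) = a(n). *)
Definition hopping (R : ringType) (a : int -> R) (l : nat) : 'M[R]_l :=
  \matrix_(i < l, j < l)
    (if (j : nat) == i.+1 then a (Posz i.+2)
     else if (j : nat).+1 == i then a (Posz i.+1)
     else 0).

(* Main.v *)
Require Import Defs.
From mathcomp Require Import all_boot all_order all_algebra.
From mathcomp Require Import reals.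
From mathcomp.algebra_tactics Require Import lra.
From mathcomp Require Import zify.
Import Order.TTheory GRing.Theory Num.Theory.
Set Implicit Arguments. Unset Strict Implicit. Unset Printing Implicit Defensive.
Local Open Scope ring_scope.
Lemma step (R : realFieldType) (M E a1 a2 y z w : R) : 0 < M -> `|E| <= 2*M ->
  M^-1 <= `|a1| -> `|a2| <= M -> a1*y = E*z - a2*w ->
  `|y| <= M*(2*M*`|z| + M*`|w|).
Proof.
move=> M0 hE h1 h2 e.
have h : `|a1*y| <= 2*M*`|z| + M*`|w|.
  rewrite e; apply: le_trans (ler_normB _ _) _; rewrite !normrM.
  apply: lerD; apply: ler_wpM2r => //.
have hy : `|y| = M * (M^-1 * `|y|) by rewrite mulrA mulfV ?gt_eqF // mul1r.
rewrite hy; apply: ler_wpM2l; first exact: ltW.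
apply: le_trans h; rewrite normrM; apply: ler_wpM2r => //.
Qed.

Lemma comb (R : realFieldType) (M X F1 F2 F3 : R) : 0 < M -> 0 <= X -> 0 <= F1 -> 0 <= F2 -> 0 <= F3 ->
  X <= M*(2*M*F1 + M*F2) -> F1 <= M*(2*M*F2 + M*F3) ->
  X^+2 <= 2*(6*M^+4+M^+2)^+2 * (F2^+2+F3^+2).
Proof.
move=> M0 X0 F10 F20 F30 h1 h2.
set K := 6*M^+4+M^+2.
have hX : X <= K*(F2+F3).
  apply: le_trans h1 _.
  have : M*(2*M*F1) <= M*(2*M*(M*(2*M*F2 + M*F3))).
    apply: ler_wpM2l; first exact: ltW.
    apply: ler_wpM2l => //. nra.
  have p1 : 0 <= M^+4*F2 by apply: mulr_ge0 => //; apply: exprn_ge0; exact: ltW.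
  have p2 : 0 <= M^+4*F3 by apply: mulr_ge0 => //; apply: exprn_ge0; exact: ltW.
  have p3 : 0 <= M^+2*F3 by apply: mulr_ge0 => //; apply: exprn_ge0; exact: ltW.
  rewrite /K; nra.
have K0 : 0 <= K by rewrite /K; nra.
have : X^+2 <= (K*(F2+F3))^+2 by rewrite !expr2; apply: ler_pM.
have := sqr_ge0 (K*(F2-F3)).
nra.
Qed.
Definition fv (R : numDomainType) l (phi : 'cV[R]_l) (n : nat) : R :=
  \sum_(j < l) (if (j : nat) == n then phi j 0 else 0).

Lemma fv_ord (R : numDomainType) l (phi : 'cV[R]_l) (j : 'I_l) : fv phi j = phi j 0.
Proof.
rewrite /fv (bigD1 j) //= eqxx big1 ?addr0 // => k /negbTE kj.
by case: eqP => // /val_inj e; rewrite e eqxx in kj.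
Qed.

Lemma fv_big (R : numDomainType) l (phi : 'cV[R]_l) n : (l <= n)%N -> fv phi n = 0.
Proof.
move=> hn; rewrite /fv big1 // => k _.
by case: eqP => // e; have := ltn_ord k; rewrite e ltnNge hn.
Qed.

Lemma row_eq (R : numDomainType) l (a : int -> R) (phi : 'cV[R]_l) E n :
  hopping a l *m phi = E *: phi -> (n < l)%N ->
  E * fv phi n = a (Posz n.+2) * fv phi n.+1 +
     (if n is k.+1 then a (Posz n.+1) * fv phi k else 0).
Proof.
move=> H hn.
have := congr1 (fun A : 'cV_l => A (Ordinal hn) 0) H => /=.
rewrite !mxE /= => e.
have fvo := fv_ord phi (Ordinal hn); rewrite /= in fvo.
rewrite fvo -e.
under eq_bigr => j _ do rewrite mxE.
have split : forall j : 'I_l,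
  (if (j:nat) == n.+1 then a (Posz n.+2) else if (j:nat).+1 == n then a (Posz n.+1) else 0) * phi j 0
  = a (Posz n.+2) * (if (j:nat) == n.+1 then phi j 0 else 0) +
    (if (j:nat).+1 == n then a (Posz n.+1) * phi j 0 else 0).
  move=> j; case: eqP => e1; case: eqP => e2 /=; try lia;
    by rewrite ?mulr0 ?mul0r ?add0r ?addr0.
rewrite (eq_bigr _ (fun j _ => split j)) big_split /= -mulr_sumr.
congr (_ + _).
case: n hn {e fvo split} => [|k] hk.
  by rewrite big1.
by rewrite /fv mulr_sumr; apply: eq_bigr => j _; rewrite eqSS; case: eqP => _; rewrite ?mulr0.
Qed.

Lemma sum2 (R : numDomainType) l (P : pred 'I_l) (F : 'I_l -> R) i j :
  (forall k, 0 <= F k) -> P i -> P j -> i != j -> F i + F j <= \sum_(k | P k) F k.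
Proof.
move=> F0 Pi Pj ij.
rewrite (bigD1 i) //= (bigD1 j) /=; last by rewrite Pj eq_sym ij.
by rewrite addrA lerDl sumr_ge0.
Qed.

Theorem mainTheorem14 (R : realType) (M : R) :
  1 < M ->
  exists C : R, 1 < C /\
  exists L : nat, forall l : nat, (L <= l)%N ->
  forall a : int -> R, (forall n : int, M^-1 <= `|a n| <= M) ->
  forall (E : R) (phi : 'cV[R]_l),
    hopping a l *m phi = E *: phi ->
    \sum_(i < l) phi i 0 ^+ 2 = 1 ->
    let u := fun i : 'I_l => phi i 0 ^+ 2 in
    forall j0 : 'I_l, (forall j : 'I_l, u j <= u j0) ->
    (* K = {1..l} \ {j0-1, j0, j0+1}, i.e. sites at distance > 1 from j0 *)
    let normK := \sum_(i < l | ((i : nat).+1 < j0)%N || ((j0 : nat).+1 < i)%N) `|u i| in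
    C^-1 < normK < 1.
Proof.
move=> M1.
have M0 : 0 < M by lra.
have K0 : 0 < 2*(6*M^+4+M^+2)^+2.
  apply: mulr_gt0 => //; apply: exprn_gt0; apply: addr_gt0; apply: mulr_gt0 => //;
    exact: exprn_gt0.
move: K0; set D := 2*(6*M^+4+M^+2)^+2 => D0.
exists (2*(1+3*D)); split; first lra.
exists 6%N => l hl a ha E phi H hsum u j0 hmax.
cbv zeta.
set normK := \sum_(i < l | _) _.
set x := phi j0 0.
have ha1 n : M^-1 <= `|a n| by case/andP: (ha n).
have ha2 n : `|a n| <= M by case/andP: (ha n).
have fle n : `|fv phi n| <= `|x|.
  case: (ltnP n l) => hn; last by rewrite fv_big // normr0 normr_ge0.
  have := hmax (Ordinal hn); rewrite /u.
  have fo := fv_ord phi (Ordinal hn); rewrite /= in fo; rewrite fo => h.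
  by rewrite -ler_sqr ?nnegrE ?normr_ge0 // !real_normK ?num_real.
have x2pos : 0 < x^+2.
  rewrite lt0r sqr_ge0 andbT; apply/eqP => x0.
  have : \sum_(i<l) phi i 0 ^+2 <= 0 by apply: sumr_le0 => i _; rewrite -x0; exact: hmax i.
  rewrite hsum; lra.
have xpos : 0 < `|x|.
  rewrite normr_gt0; apply: contraTneq x2pos => ->; by rewrite expr0n /= ltxx.
have hE : `|E| <= 2*M.
  have r0 := row_eq H (ltn_ord j0); rewrite fv_ord in r0.
  have : `|E| * `|x| <= 2*M * `|x|.
    rewrite -normrM r0; apply: le_trans (ler_normD _ _) _.
    have t1 : `|a (Posz (nat_of_ord j0).+2) * fv phi (nat_of_ord j0).+1| <= M * `|x|.
      by rewrite normrM; apply: ler_pM.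
    have t2 : `|if nat_of_ord j0 is k.+1 then a (Posz (nat_of_ord j0).+1) * fv phi k else 0| <= M * `|x|.
      case: (nat_of_ord j0) => [|k] /=; first by rewrite normr0; apply: mulr_ge0; [exact: ltW | exact: normr_ge0].
      by rewrite normrM; apply: ler_pM.
    lra.
  by rewrite ler_pM2r.
set P := fun i : 'I_l => ((i : nat).+1 < j0)%N || ((j0 : nat).+1 < i)%N.
have key : exists i2 i3 : 'I_l, [/\ i2 != i3, P i2, P i3 & x^+2 <= D * (u i2 + u i3)].
  case: (ltnP (nat_of_ord j0).+3 l) => hr.
  - have h2 : ((nat_of_ord j0).+2 < l)%N by lia.
    have h1 : ((nat_of_ord j0).+1 < l)%N by lia.
    have r1 := row_eq H h1; have r2 := row_eq H h2; rewrite /= fv_ord in r1; rewrite /= in r2.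
    have e1 : a (Posz (nat_of_ord j0).+2) * x = E * fv phi (nat_of_ord j0).+1 - a (Posz (nat_of_ord j0).+3) * fv phi (nat_of_ord j0).+2.
      rewrite /x; lra.
    have e2 : a (Posz (nat_of_ord j0).+3) * fv phi (nat_of_ord j0).+1 = E * fv phi (nat_of_ord j0).+2 - a (Posz (nat_of_ord j0).+4) * fv phi (nat_of_ord j0).+3.
      lra.
    have s1 := step M0 hE (ha1 _) (ha2 _) e1.
    have s2 := step M0 hE (ha1 _) (ha2 _) e2.
    have c := comb M0 (normr_ge0 _) (normr_ge0 _) (normr_ge0 _) (normr_ge0 _) s1 s2.
    rewrite !real_normK ?num_real // in c.
    exists (Ordinal h2), (Ordinal hr); split.
    + by apply/eqP => -[]; lia.
    + rewrite /P /=; lia.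
    + rewrite /P /=; lia.
    have f2 := fv_ord phi (Ordinal h2); have f3 := fv_ord phi (Ordinal hr).
    by rewrite /= in f2 f3; rewrite /u /= -f2 -f3.
  - have hl3 : (3 <= nat_of_ord j0)%N by lia.
    have [m em] : exists m, nat_of_ord j0 = m.+3 by exists (nat_of_ord j0 - 3)%N; lia.
    have h2 : (m.+2 < l)%N by have := ltn_ord j0; lia.
    have h1 : (m.+1 < l)%N by lia.
    have h0 : (m < l)%N by lia.
    have r1 := row_eq H h1; have r2 := row_eq H h2; rewrite /= in r1 r2.
    have ex : fv phi m.+3 = x by rewrite -em fv_ord.
    rewrite ex in r2.
    have e1 : a (Posz m.+4) * x = E * fv phi m.+2 - a (Posz m.+3) * fv phi m.+1.
      lra.
    have e2 : a (Posz m.+3) * fv phi m.+2 = E * fv phi m.+1 - a (Posz m.+2) * fv phi m.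
      lra.
    have s1 := step M0 hE (ha1 _) (ha2 _) e1.
    have s2 := step M0 hE (ha1 _) (ha2 _) e2.
    have c := comb M0 (normr_ge0 _) (normr_ge0 _) (normr_ge0 _) (normr_ge0 _) s1 s2.
    rewrite !real_normK ?num_real // in c.
    exists (Ordinal h1), (Ordinal h0); split.
    + by apply/eqP => -[]; lia.
    + rewrite /P /= em; lia.
    + rewrite /P /= em; lia.
    have f2 := fv_ord phi (Ordinal h1); have f3 := fv_ord phi (Ordinal h0).
    by rewrite /= in f2 f3; rewrite /u /= -f2 -f3.
have nKE : normK = \sum_(i < l | P i) u i.
  by apply: eq_bigr => i _; rewrite ger0_norm // sqr_ge0.
have hsplit : 1 = normK + \sum_(i < l | ~~ P i) u i.
  by rewrite -hsum (bigID P) /= nKE.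
have nK_lb : x^+2 <= D * normK.
  case: key => i2 [i3 [ne P2 P3 hx]]; apply: le_trans hx _.
  rewrite nKE ler_pM2l //; apply: sum2 => // k; exact: sqr_ge0.
have cardJ : (#|[pred i : 'I_l | ~~ P i]| <= 3)%N.
  rewrite cardE -(size_map val).
  apply: (leq_trans (uniq_leq_size (s2 := [:: (nat_of_ord j0).-1; nat_of_ord j0; (nat_of_ord j0).+1]) _ _)) => //.
    by rewrite map_inj_uniq ?enum_uniq //; exact: val_inj.
  move=> k /mapP [i]; rewrite mem_enum inE /P negb_or -!leqNgt => /andP[hh1 hh2] ->.
  rewrite !inE.
  have : (nat_of_ord i = (nat_of_ord j0).-1) \/ (nat_of_ord i = nat_of_ord j0) \/ (nat_of_ord i = (nat_of_ord j0).+1) by lia.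
  by case=> [e|[e|e]]; rewrite /= e eqxx ?orbT.
have hJ : \sum_(i < l | ~~ P i) u i <= 3 * x^+2.
  apply: le_trans (_ : \sum_(i < l | ~~ P i) x^+2 <= _).
    by apply: ler_sum => i _; exact: hmax.
  have := sumr_const [pred i : 'I_l | ~~ P i] (x^+2); rewrite /= => ->.
  rewrite -[x^+2 *+ _]mulr_natl [3 * _]mulrC [_%:R * _]mulrC; apply: ler_wpM2l; first exact: sqr_ge0.
  by rewrite ler_nat.
have hJ0 : x^+2 <= \sum_(i < l | ~~ P i) u i.
  rewrite (bigD1 j0) /=; last by rewrite /P; apply/negP; lia.
  by rewrite lerDl sumr_ge0 // => i _; exact: sqr_ge0.
apply/andP; split; last lra.
rewrite -[X in X < _]mulr1 ltr_pdivrMl; last lra.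
have hN : 1 <= (1 + 3*D) * normK by nra.
nra.
Qed.
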